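(* Consider Phase-1 training with learning rate $\alpha>0$ on a fixed batch of size $N$, fix $a_\star\in(0,1]$ and let $T_\star := \min\{t:|a_t|\ge a_\star\}$. Let $q_\star := c_0/\sqrt N>0$. Assume $\mathrm{sign}(a_0) = \mathrm{sign}(q_0)$, $|q_0|\ge q_\star$, and $\alpha a_\star\|\widehat M\|_2\le\frac12$. Then \[ \|w_{T_\star} - w_0\|_2 \le \frac{8\|\widehat M\|_2}{q_\star}a_\star(a_\star - |a_0|)_+ + 4\alpha\|\widehat M\|_2 a_\star . \]
   Context: $\widehat M := \frac1N\sum_{s=1}^N y^{(s)}x^{(s)}x^{(s)\top}$ for samples $x^{(s)}\in\{\pm1\}^d$, $y^{(s)} = x^{(s)}_1x^{(s)}_2$. Phase-1 updates: $a_{t+1} = \mathrm{clip}_{[-1,1]}(a_t + \frac\alpha2 q_t)$, $w_{t+1} = \frac{w_t+\alpha a_t\widehat Mw_t}{\|w_t+\alpha a_t\widehat Mw_t\|_2}$, $q_t := w_t^\top\widehat Mw_t$, with $w_0$ a unit vector. $c_0>0$ is a constant. $(z)_+ = \max\{z,0\}$, and $\|\widehat M\|_2$ is the operator norm. *)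

(* Defs.v *)
From HB Require Import structures.
From mathcomp Require Import all_boot all_order all_algebra.
From mathcomp Require Import boolp classical_sets reals.
Set Implicit Arguments. Unset Strict Implicit. Unset Printing Implicit Defensive.
Import Order.TTheory GRing.Theory Num.Theory.
Local Open Scope ring_scope.
Local Open Scope classical_set_scope.

Definition norm2 {R : realType} {n : nat} (v : 'cV[R]_n) : R :=
  Num.sqrt (\sum_(i < n) v i 0 ^+ 2).

Definition opnorm2 {R : realType} {n : nat} (M : 'M[R]_n) : R :=
  sup [set norm2 (M *m v) | v in [set v : 'cV[R]_n | norm2 v = 1]].

(* Empirical matrix  Mhat = 1/N sum_s y^(s) x^(s) x^(s)^T,
   with x^(s) in {+-1}^(d+2) and y^(s) = x^(s)_1 x^(s)_2 (first two coords). *)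
Definition Mhat {R : realType} {N d : nat} (x : 'I_N -> 'cV[R]_d.+2) : 'M[R]_d.+2 :=
  N%:R^-1 *: \sum_(s < N) ((x s ord0 0 * x s (lift ord0 ord0) 0) *: (x s *m (x s)^T)).

Definition clip1 {R : realType} (z : R) : R := Num.max (-1) (Num.min 1 z).

Definition quad {R : realType} {n : nat} (M : 'M[R]_n) (w : 'cV[R]_n) : R :=
  ((w^T *m M *m w) 0 0).

Definition wstep {R : realType} {n : nat} (alpha : R) (M : 'M[R]_n) (a : R) (w : 'cV[R]_n)
  : 'cV[R]_n :=
  let u := w + (alpha * a) *: (M *m w) in (norm2 u)^-1 *: u.

(* Main.v *)
Require Import Defs.
From HB Require Import structures.
From mathcomp Require Import all_boot all_order all_algebra.
From mathcomp Require Import boolp classical_sets reals.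
From mathcomp Require Import ring lra.
Import Order.TTheory GRing.Theory Num.Theory.
Local Open Scope ring_scope.

Section Dot.
Context {R : realType} {n : nat}.
Implicit Types u v w : 'cV[R]_n.

Definition dot u v : R := (u^T *m v) 0 0.

Lemma dotE u v : dot u v = \sum_i u i 0 * v i 0.
Proof. by rewrite /dot !mxE; apply: eq_bigr => i _; rewrite mxE. Qed.

Lemma dotC u v : dot u v = dot v u.
Proof. by rewrite !dotE; apply: eq_bigr => i _; rewrite mulrC. Qed.

Lemma dotDl u v w : dot (u + v) w = dot u w + dot v w.
Proof. by rewrite !dotE -big_split; apply: eq_bigr => i _; rewrite mxE mulrDl. Qed.

Lemma dotZl (c : R) u v : dot (c *: u) v = c * dot u v.
Proof. by rewrite !dotE mulr_sumr; apply: eq_bigr => i _; rewrite mxE mulrA. Qed.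

Lemma dotNl u v : dot (- u) v = - dot u v.
Proof. by rewrite -scaleN1r dotZl mulN1r. Qed.

Lemma dotDr u v w : dot w (u + v) = dot w u + dot w v.
Proof. by rewrite dotC dotDl !(dotC w). Qed.

Lemma dotZr (c : R) u v : dot v (c *: u) = c * dot v u.
Proof. by rewrite dotC dotZl dotC. Qed.

Lemma dotNr u v : dot v (- u) = - dot v u.
Proof. by rewrite dotC dotNl dotC. Qed.

Lemma dotBl u v w : dot (u - v) w = dot u w - dot v w.
Proof. by rewrite dotDl dotNl. Qed.

Lemma dotBr u v w : dot w (u - v) = dot w u - dot w v.
Proof. by rewrite dotDr dotNr. Qed.

Lemma dot_ge0 v : 0 <= dot v v.
Proof. by rewrite dotE; apply: sumr_ge0 => i _; rewrite -expr2 sqr_ge0. Qed.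

Lemma dot_eq0 v : dot v v = 0 -> v = 0.
Proof.
rewrite dotE => /psumr_eq0P H.
have {}H := H (fun i _ => ltac:(rewrite -expr2; exact: sqr_ge0)).
apply/matrixP => i j; rewrite (ord1 j) mxE.
by have /eqP := H i isT; rewrite -expr2 sqrf_eq0 => /eqP->.
Qed.

Lemma norm2E v : norm2 v = Num.sqrt (dot v v).
Proof. by rewrite /norm2 dotE; congr Num.sqrt; apply: eq_bigr => i _; rewrite expr2. Qed.


Lemma le_sq (a b : R) : 0 <= b -> a ^+ 2 <= b ^+ 2 -> a <= b.
Proof. move=> *; nra. Qed.

Lemma dot0r u : dot u 0 = 0.
Proof. by rewrite dotE big1 // => i _; rewrite mxE mulr0. Qed.

Lemma CS2 u v : dot u v ^+ 2 <= dot u u * dot v v.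
Proof.
case: (eqVneq (dot v v) 0) => [/dot_eq0 -> | nz].
  by rewrite dot0r expr0n /= dot0r mulr0.
have h := dot_ge0 (dot v v *: u - dot u v *: v).
rewrite dotBl !dotBr !dotZl !dotZr (dotC v u) in h.
have vp : 0 < dot v v by rewrite lt_def nz dot_ge0.
have h2 : 0 <= dot v v * (dot v v * dot u u - dot u v ^+ 2).
  by rewrite (_ : _ * _ = dot v v * (dot v v * dot u u) - dot v v * (dot u v * dot u v) -
     (dot u v * (dot v v * dot u v) - dot u v * (dot u v * dot v v))) //; ring.
rewrite pmulr_rge0 // subr_ge0 in h2.
by rewrite mulrC.
Qed.

Lemma norm2_ge0 v : 0 <= norm2 v.
Proof. by rewrite norm2E sqrtr_ge0. Qed.

Lemma norm2_sq v : norm2 v ^+ 2 = dot v v.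
Proof. by rewrite norm2E sqr_sqrtr // dot_ge0. Qed.

Lemma CS u v : `|dot u v| <= norm2 u * norm2 v.
Proof.
apply: le_sq; first by rewrite mulr_ge0 // norm2_ge0.
by rewrite real_normK ?num_real // exprMn !norm2_sq CS2.
Qed.

Lemma CSr u v : dot u v <= norm2 u * norm2 v.
Proof. exact: le_trans (ler_norm _) (CS u v). Qed.

Lemma CSl u v : - (norm2 u * norm2 v) <= dot u v.
Proof. by move: (CS u v); rewrite ler_norml => /andP[]. Qed.

Lemma norm2Z (c : R) v : norm2 (c *: v) = `|c| * norm2 v.
Proof.
by rewrite !norm2E dotZl dotZr mulrA -expr2 sqrtrM ?sqr_ge0 // sqrtr_sqr.
Qed.

Lemma norm2N v : norm2 (- v) = norm2 v.
Proof. by rewrite -scaleN1r norm2Z normrN1 mul1r. Qed.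

Lemma norm2D u v : norm2 (u + v) <= norm2 u + norm2 v.
Proof.
apply: le_sq; first by rewrite addr_ge0 // norm2_ge0.
rewrite norm2_sq dotDl !dotDr (dotC v u) sqrrD !norm2_sq.
have := CSr u v; lra.
Qed.

Lemma norm2_eq0 v : norm2 v = 0 -> v = 0.
Proof. by move=> h; apply: dot_eq0; rewrite -norm2_sq h expr0n. Qed.

End Dot.

Section Op.
Context {R : realType} {n : nat}.
Variable M : 'M[R]_n.
Implicit Types u v w : 'cV[R]_n.

Lemma dotM u v : dot u (M *m v) = dot (M^T *m u) v.
Proof. by rewrite /dot trmx_mul trmxK mulmxA. Qed.

Lemma quadE w : quad M w = dot w (M *m w).
Proof. by rewrite /quad /dot mulmxA. Qed.

Lemma sq_le (a b : R) : `|a| <= b -> a ^+ 2 <= b ^+ 2.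
Proof. move=> h; rewrite -real_normK ?num_real //; have := normr_ge0 a; nra. Qed.

Lemma norm20 : norm2 (0 : 'cV[R]_n) = 0.
Proof. by rewrite norm2E dot0r sqrtr0. Qed.

Lemma opnorm_bound (w0 : 'cV[R]_n) : norm2 w0 = 1 ->
  forall v, norm2 (M *m v) <= opnorm2 M * norm2 v.
Proof.
move=> hw0.
set B := Num.sqrt (\sum_i (\sum_j `|M i j|) ^+ 2).
have hs : has_sup [set norm2 (M *m v) | v in [set v : 'cV[R]_n | norm2 v = 1]].
  split; first by exists (norm2 (M *m w0)); exists w0.
  exists B => _ [v hv <-].
  have vj : forall j, `|v j 0| <= 1.
    move=> j; apply: le_sq => //; rewrite real_normK ?num_real // expr1n.
    move: hv; rewrite /norm2 => hv.
    have <- : \sum_(i < n) v i 0 ^+ 2 = 1.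
      have s0 : 0 <= \sum_(i < n) v i 0 ^+ 2 by apply: sumr_ge0 => i _; apply: sqr_ge0.
      by rewrite -(sqr_sqrtr s0) hv expr1n.
    rewrite (bigD1 j) //= lerDl; apply: sumr_ge0 => i _; apply: sqr_ge0.
  rewrite /norm2; apply: ler_wsqrtr; apply: ler_sum => i _.
  apply: sq_le; rewrite mxE.
  apply: le_trans (ler_norm_sum _ _ _) _.
  apply: ler_sum => j _; rewrite normrM.
  by rewrite -{2}(mulr1 `|M i j|) ler_wpM2l.
move=> v.
case: (eqVneq (norm2 v) 0) => [/norm2_eq0 -> | nz].
  by rewrite mulmx0 norm20 mulr0.
have vp : 0 < norm2 v by rewrite lt_def nz norm2_ge0.
have := sup_upper_bound hs (x := norm2 (M *m ((norm2 v)^-1 *: v))).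
rewrite -scalemxAr norm2Z ger0_norm ?invr_ge0 ?norm2_ge0 //.
have -> : (norm2 v)^-1 * norm2 (M *m v) = norm2 (M *m v) / norm2 v by rewrite mulrC.
rewrite ler_pdivrMr // => H; apply: H.
exists ((norm2 v)^-1 *: v) => //.
rewrite /= norm2Z ger0_norm ?invr_ge0 ?norm2_ge0 // mulVf //.
by rewrite -scalemxAr norm2Z ger0_norm ?invr_ge0 ?norm2_ge0 // mulrC.
Qed.

End Op.

Section Step.
Context {R : realType} {n : nat}.
Variable M : 'M[R]_n.
Variable L : R.
Hypothesis HMs : M^T = M.
Hypothesis HL : forall v, norm2 (M *m v) <= L * norm2 v.

Lemma step (w : 'cV[R]_n) (alpha a : R) : norm2 w = 1 -> `|alpha * a| * L <= 1/2 ->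
  let w' := wstep alpha M a w in
  [/\ norm2 w' = 1, norm2 (w' - w) <= 2 * (`|alpha * a| * L)
    & 0 <= (alpha * a) * (quad M w' - quad M w)].
Proof.
move=> hw hb w'.
set b := alpha * a in hb w' *.
set z := M *m w.
set u := w + b *: z.
have L0 : 0 <= L by have := HL w; rewrite hw mulr1 => h; have := norm2_ge0 (M *m w); lra.
have hz : norm2 z <= L by have := HL w; rewrite hw mulr1.
have hbz : norm2 (b *: z) <= 1/2.
  rewrite norm2Z; apply: le_trans _ hb; by rewrite ler_wpM2l.
have hu1 : norm2 u <= 1 + norm2 (b *: z) by rewrite -hw norm2D.
have hu2 : 1 - norm2 (b *: z) <= norm2 u.
  have := norm2D u (- (b *: z)); rewrite /u addrK norm2N hw; lra.
have up : 0 < norm2 u by have := norm2_ge0 (b *: z); lra.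
have w'E : w' = (norm2 u)^-1 *: u by [].
have cu : (norm2 u)^-1 * norm2 u = 1 by rewrite mulVf // gt_eqF.
split.
- by rewrite w'E norm2Z ger0_norm ?invr_ge0 ?norm2_ge0.
- have -> : w' - w = ((norm2 u)^-1 - 1) *: u + b *: z.
    by rewrite w'E scalerBl scale1r /u opprD addrA subrK.
  have := norm2D (((norm2 u)^-1 - 1) *: u) (b *: z).
  rewrite (norm2Z _ u) -[X in _ * X](ger0_norm (ltW up)) -normrM mulrBl cu mul1r.
  have : norm2 (b *: z) <= `|b| * L by rewrite norm2Z ler_wpM2l.
  move=> h; have : `|1 - norm2 u| <= norm2 (b *: z).
    by rewrite ler_norml; apply/andP; split; lra.
  lra.
- have dwM : forall y, dot w (M *m y) = dot z y by move=> y; rewrite dotM HMs.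
  have dzM : forall y, dot z (M *m y) = dot (M *m z) y by move=> y; rewrite dotM HMs.
  set m1 := dot w z. set m2 := dot z z. set m3 := dot z (M *m z).
  have ww : dot w w = 1 by rewrite -norm2_sq hw expr1n.
  have Mu : M *m u = z + b *: (M *m z) by rewrite /u mulmxDr -scalemxAr.
  have PE : dot u (M *m u) = m1 + 2 * b * m2 + b ^+ 2 * m3.
    rewrite Mu /u dotDl !dotDr !dotZl !dotZr dwM ?(dotC z w) /m1 /m2 /m3; ring.
  have QE : dot u u = 1 + 2 * b * m1 + b ^+ 2 * m2.
    rewrite /u dotDl !dotDr !dotZl !dotZr ww ?(dotC z w) /m1 /m2; ring.
  have cQ : (norm2 u)^-1 ^+ 2 * dot u u = 1 by rewrite -norm2_sq -exprMn cu expr1n.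
  have q'E : quad M w' = (norm2 u)^-1 ^+ 2 * dot u (M *m u).
    by rewrite quadE w'E -scalemxAr dotZl dotZr mulrA -expr2.
  have qE : quad M w = m1 by rewrite quadE.
  set v := z - m1 *: w.
  have eE : dot v v = m2 - m1 ^+ 2.
    rewrite /v dotBl !dotBr !dotZl !dotZr ww ?(dotC z w) /m1 /m2; ring.
  have fE : dot v (M *m v) = m3 - 2 * m1 * m2 + m1 ^+ 3.
    rewrite /v mulmxBr -scalemxAr dotBl !dotBr !dotZl !dotZr dwM dzM -/z.
    rewrite (dotC (M *m z) z) /m1 /m2 /m3; ring.
  have hf : `|dot v (M *m v)| <= L * dot v v.
    apply: le_trans (CS _ _) _; rewrite -norm2_sq expr2 mulrA [L * _]mulrC.
    have := HL v; have := norm2_ge0 v; nra.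
  have hm1 : `|m1| <= L by apply: le_trans (CS _ _) _; rewrite hw mul1r.
  have e0 : 0 <= dot v v by apply: dot_ge0.
  rewrite eE in hf e0; rewrite fE in hf.
  set e := m2 - m1 ^+ 2 in hf e0.
  set f := m3 - 2 * m1 * m2 + m1 ^+ 3 in hf.
  have hp : `|b * m1| <= 1/2.
    rewrite normrM; apply: le_trans hb; by rewrite ler_wpM2l.
  have hg : `|b * f| <= e / 2.
    rewrite normrM; apply: (le_trans (y := `|b| * (L * e))); first by rewrite ler_wpM2l.
    rewrite mulrA; have := normr_ge0 b; nra.
  have key : b * (dot u (M *m u) - m1 * dot u u) = b ^+ 2 * (2 * e + (b * m1) * e + b * f).
    rewrite PE QE /e /f; ring.
  have key0 : 0 <= b * (dot u (M *m u) - m1 * dot u u).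
    rewrite key mulr_ge0 ?sqr_ge0 //.
    move: hp hg; rewrite !ler_norml => /andP[hp1 hp2] /andP[hg1 hg2]; nra.
  rewrite q'E qE.
  have -> : (norm2 u)^-1 ^+ 2 * dot u (M *m u) - m1 = (norm2 u)^-1 ^+ 2 * (dot u (M *m u) - m1 * dot u u).
    by rewrite mulrBr (mulrCA _ m1) cQ mulr1.
  by rewrite mulrCA mulr_ge0 ?sqr_ge0.
Qed.
End Step.

Lemma clip_mid {R : realType} (y : R) : `|clip1 y| < 1 -> clip1 y = y.
Proof.
rewrite /clip1 minEle maxEle.
case: (lerP 1 y) => h1 /=.
  by case: (lerP (-1) 1) => h2 /= /ltr_normlP [h3 h4]; lra.
case: (lerP (-1) y) => h2 /= /ltr_normlP [h3 h4]; lra.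
Qed.

Lemma Mhat_sym {R : realType} {N d : nat} (x : 'I_N -> 'cV[R]_d.+2) : (Mhat x)^T = Mhat x.
Proof.
rewrite /Mhat linearZ /= linear_sum /=; congr (_ *: _); apply: eq_bigr => s _.
by rewrite linearZ /= trmx_mul trmxK.
Qed.

Theorem lemma11 (R : realType) (N d : nat) (x : 'I_N -> 'cV[R]_d.+2)
  (c0 alpha astar : R) (a : nat -> R) (w : nat -> 'cV[R]_d.+2) (Tstar : nat) :
  (0 < N)%N ->
  (forall s i, x s i 0 = 1 \/ x s i 0 = -1) ->
  0 < c0 -> 0 < alpha -> 0 < astar -> astar <= 1 ->
  norm2 (w 0%N) = 1 ->
  (forall t, a t.+1 = clip1 (a t + alpha / 2 * quad (Mhat x) (w t))) ->
  (forall t, w t.+1 = wstep alpha (Mhat x) (a t) (w t)) ->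
  (* Tstar = min { t | |a_t| >= astar } *)
  astar <= `|a Tstar| -> (forall t, (t < Tstar)%N -> `|a t| < astar) ->
  Num.sg (a 0%N) = Num.sg (quad (Mhat x) (w 0%N)) ->
  c0 / Num.sqrt (N%:R) <= `|quad (Mhat x) (w 0%N)| ->
  alpha * astar * opnorm2 (Mhat x) <= 1 / 2 ->
  norm2 (w Tstar - w 0%N) <=
    8 * opnorm2 (Mhat x) / (c0 / Num.sqrt (N%:R)) * astar
      * Num.max 0 (astar - `|a 0%N|)
    + 4 * alpha * opnorm2 (Mhat x) * astar.
Proof.
move=> N0 _ c00 al0 as0 as1 hw0 ha hw hT hlt hsg hq0 hLa.
set M := Mhat x in ha hw hsg hq0 hLa *.
set L := opnorm2 M in hLa *.
set qs := c0 / Num.sqrt N%:R in hq0 *.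
have HMs : M^T = M by apply: Mhat_sym.
have HL := opnorm_bound M (w 0%N) hw0.
have L0 : 0 <= L by have := HL (w 0%N); rewrite hw0 mulr1 => h; exact: (le_trans (norm2_ge0 _) h).
have qs0 : 0 < qs by rewrite divr_gt0 // sqrtr_gt0 ltr0n.
have a0nz : a 0%N != 0.
  apply/negP => /eqP h0; move: hsg; rewrite h0 sgr0 => /esym/eqP; rewrite sgr_eq0 => /eqP h.
  by move: hq0; rewrite h normr0; lra.
set s := Num.sg (a 0%N).
have sa0 : s * a 0%N = `|a 0%N| by rewrite normrEsg.
have sq0 : s * quad M (w 0%N) = `|quad M (w 0%N)| by rewrite normrEsg -hsg.
have ss : s * s = 1 by rewrite /s -sgrM gtr0_sg // -expr2 lt_def sqr_ge0 sqrf_eq0 a0nz.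
have a0p : 0 < `|a 0%N| by rewrite normr_gt0.
have P : forall t, (t <= Tstar)%N ->
  [/\ norm2 (w t) = 1, qs <= s * quad M (w t),
      ((t < Tstar)%N -> `|a 0%N| + alpha / 2 * qs * t%:R <= s * a t)
    & norm2 (w t - w 0%N) <= 2 * alpha * astar * L * t%:R].
  elim=> [|t IH] Ht.
    by split=> //; [rewrite sq0 | rewrite mulr0 addr0 sa0 | rewrite subrr norm20 mulr0].
  have Ht' : (t < Tstar)%N by [].
  have [hwt hqt hat hdt] := IH (ltnW Ht').
  have {}hat := hat Ht'.
  have hltt := hlt t Ht'.
  have sat : 0 < s * a t.
    have h2 : 0 <= alpha / 2 by lra.
    have := mulr_ge0 (mulr_ge0 h2 (ltW qs0)) (ler0n R t).
    lra.
  have hnat : `|a t| = s * a t.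
    rewrite -(gtr0_norm sat) normrM /s normr_sg a0nz mul1r //.
  have hb : `|alpha * a t| * L <= 1/2.
    apply: le_trans hLa; rewrite normrM gtr0_norm // -mulrA -mulrA ler_pM2l //.
    by rewrite ler_wpM2r // ltW.
  have [hw' hd' hm] := step M L HMs HL (w t) alpha (a t) hwt hb.
  rewrite -hw in hw' hd' hm.
  split=> //.
  - suff : s * quad M (w t) <= s * quad M (w t.+1) by move: hqt; lra.
    have : 0 <= (s * (quad M (w t.+1) - quad M (w t))) * (alpha * (s * a t)).
      have -> : (s * (quad M (w t.+1) - quad M (w t))) * (alpha * (s * a t)) =
        (s * s) * (alpha * a t * (quad M (w t.+1) - quad M (w t))) by ring.
      by rewrite ss mul1r.
    have Q0 : 0 < alpha * (s * a t) by rewrite mulr_gt0.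
    by rewrite (pmulr_lge0 _ Q0) => h; rewrite -subr_ge0 -mulrBr.
  - move=> Ht2.
    have hlt2 := hlt _ Ht2.
    rewrite ha clip_mid; last by rewrite -ha; lra.
    rewrite -[t.+1%:R]natr1 mulrDr mulr1 mulrDr (mulrCA s).
    have : alpha / 2 * qs <= alpha / 2 * (s * quad M (w t)).
      by rewrite ler_pM2l // divr_gt0.
    lra.
  - have -> : w t.+1 - w 0%N = (w t.+1 - w t) + (w t - w 0%N) by rewrite addrA subrK.
    apply: le_trans (norm2D _ _) _.
    have : `|alpha * a t| * L <= alpha * astar * L.
      rewrite normrM gtr0_norm // ler_wpM2r // ler_pM2l //; lra.
    rewrite -natr1; lra.
have [_ _ _ hd] := P Tstar (leqnn _).
apply: le_trans hd _.
case: Tstar hT hlt P => [|T] hT hlt P.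
  set D := Num.max 0 (astar - `|a 0%N|).
  have D0 : 0 <= D by rewrite le_max lexx.
  have r0 : 0 <= D / qs by rewrite divr_ge0 // ltW.
  have -> : 8 * L / qs * astar * D = 8 * (astar * L) * (D / qs) by ring.
  have h1 := mulr_ge0 (mulr_ge0 (ltW as0) L0) r0.
  have h2 := mulr_ge0 (mulr_ge0 (ltW al0) L0) (ltW as0).
  rewrite mulr0; lra.
have [_ _ haT _] := P T (leqnSn _).
have {}haT := haT (ltnSn _).
have hltT := hlt T (ltnSn _).
have hsa : s * a T <= `|a T|.
  by have := ler_norm (s * a T); rewrite normrM /s normr_sg a0nz mul1r.
set D := Num.max 0 (astar - `|a 0%N|).
have D0 : 0 <= D by rewrite le_max lexx.
have D1 : astar - `|a 0%N| <= D by rewrite le_max lexx orbT.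
have r0 : 0 <= D / qs by rewrite divr_ge0 // ltW.
have -> : 8 * L / qs * astar * D = 8 * (astar * L) * (D / qs) by ring.
have hK : alpha * T%:R <= 2 * (D / qs).
  rewrite mulrA ler_pdivlMr //.
  have -> : alpha * T%:R * qs = 2 * (alpha / 2 * qs * T%:R) by field.
  lra.
have h1 := mulr_ge0 (mulr_ge0 (ltW as0) L0) r0.
have h2 := mulr_ge0 (mulr_ge0 (ltW al0) L0) (ltW as0).
have h3 := ler_wpM2l (mulr_ge0 (ltW as0) L0) hK.
rewrite -[T.+1%:R]natr1.
have -> : 2 * alpha * astar * L * (T%:R + 1) = 2 * (astar * L) * (alpha * T%:R) + 2 * (alpha * L * astar) by ring.
lra.
Qed.
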